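(* Let $M$ be an MV-algebra and $Y$ a compact Hausdorff space. Then the set $\mathcal{P}(M,C(Y))$ of all probability maps $M\to C(Y)$ is a nonempty convex subset of the real linear space $C_{\mathbb{R}}(Y)^{M}$ of all maps $M\to C_{\mathbb{R}}(Y)$.
   Context: For an MV-algebra $(M,\oplus,\neg,0)$: $1\coloneqq\neg 0$, $a\vee b\coloneqq\neg(\neg a\oplus b)\oplus b$, $a\wedge b\coloneqq\neg(\neg a\vee\neg b)$. A probability map is a function $p\colon M\to N$ between MV-algebras such that for all $a,b\in M$: (P1) $p(a\oplus b)=p(a)\oplus p(b\wedge\neg a)$; (P2) $p(\neg a)=\neg p(a)$; (P3) $p(1)=1$. $C_{\mathbb{R}}(Y)$ denotes the space of continuous real functions on $Y$, and $C(Y)$ the MV-algebra of continuous functions $Y\to[0,1]$ with pointwise operations $a\oplus b=\min(a+b,1)$, $\neg a=1-a$, $0$ the zero function. *)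

(* Defs.v *)
From HB Require Import structures.
From mathcomp Require Import all_boot all_order all_algebra.
From mathcomp Require Import all_classical all_reals all_analysis.
Set Implicit Arguments. Unset Strict Implicit. Unset Printing Implicit Defensive.
Import Order.TTheory GRing.Theory Num.Theory.
Import numFieldNormedType.Exports.
Local Open Scope ring_scope.

Record mv_sig := MVSig {
  mv_car :> Type;
  mv_oplus : mv_car -> mv_car -> mv_car;
  mv_neg : mv_car -> mv_car;
  mv_zero : mv_car }.

Section Derived.
Variable M : mv_sig.
Definition mv_one : M := mv_neg (mv_zero M).
Definition mv_join (a b : M) : M := mv_oplus (mv_neg (mv_oplus (mv_neg a) b)) b.
Definition mv_meet (a b : M) : M := mv_neg (mv_join (mv_neg a) (mv_neg b)).
End Derived.

Definition mv_axioms (M : mv_sig) : Prop :=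
  [/\ (forall x y z : M, mv_oplus x (mv_oplus y z) = mv_oplus (mv_oplus x y) z),
      (forall x y : M, mv_oplus x y = mv_oplus y x),
      (forall x : M, mv_oplus x (mv_zero M) = x),
      (forall x : M, mv_neg (mv_neg x) = x) &
      (forall x : M, mv_oplus x (mv_one M) = mv_one M)] /\
      (forall x y : M, mv_oplus (mv_neg (mv_oplus (mv_neg x) y)) y =
                       mv_oplus (mv_neg (mv_oplus (mv_neg y) x)) x).

Record mv_algebra := MVAlgebra {
  mv_sig_of :> mv_sig;
  mv_axiomsP : mv_axioms mv_sig_of }.

Definition prob_map (M N : mv_sig) (p : M -> N) : Prop :=
  [/\ (forall a b : M, p (mv_oplus a b) = mv_oplus (p a) (p (mv_meet b (mv_neg a)))),
      (forall a : M, p (mv_neg a) = mv_neg (p a)) &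
      p (mv_one M) = mv_one N].

(* Restricted to continuous [0,1]-valued functions this is the MV-algebra C(Y). *)
Definition fun_mv_sig (R : realType) (Y : Type) : mv_sig :=
  @MVSig (Y -> R) (fun f g y => Num.min (f y + g y) 1) (fun f y => 1 - f y) (fun _ => 0).

Definition in_CY (R : realType) (Y : topologicalType) (f : Y -> R) : Prop :=
  continuous f /\ (forall y, 0 <= f y <= 1).

(* P(M, C(Y)), viewed as a subset of C_R(Y)^M (maps M -> (Y -> R)). *)
Definition prob_maps_CY (R : realType) (M : mv_algebra) (Y : topologicalType)
  : set (M -> Y -> R) :=
  [set p | (forall a, in_CY (p a)) /\ @prob_map M (fun_mv_sig R Y) p].

Definition convex_fset (R : realType) (M Y : Type) (S : set (M -> Y -> R)) : Prop :=
  forall p q t, S p -> S q -> 0 <= t <= 1 ->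
    S (fun a y => t * p a y + (1 - t) * q a y).

(* Main.v *)
Require Import Defs.
From mathcomp Require Import all_boot all_order all_algebra.
From mathcomp Require Import all_classical all_reals all_analysis.
From mathcomp Require Import zify ring lra.
Import Order.TTheory GRing.Theory Num.Theory.
Import numFieldNormedType.Exports.
Set Implicit Arguments. Unset Strict Implicit. Unset Printing Implicit Defensive.
Local Open Scope classical_set_scope.

Section MVBasic.
Variable M : mv_sig.
Hypothesis ax : mv_axioms M.
Local Notation "x ⊕ y" := (@mv_oplus M x y) (at level 50, left associativity).
Local Notation "¬ x" := (@mv_neg M x) (at level 35, right associativity).
Local Notation Z := (mv_zero M).
Local Notation U := (mv_one M).
Local Notation J := (@mv_join M).
Local Notation Mt := (@mv_meet M).

Lemma addA x y z : x ⊕ (y ⊕ z) = x ⊕ y ⊕ z. Proof. by case: ax => [[]]. Qed.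
Lemma addC x y : x ⊕ y = y ⊕ x. Proof. by case: ax => [[]]. Qed.
Lemma addZ x : x ⊕ Z = x. Proof. by case: ax => [[]]. Qed.
Lemma negK x : ¬ ¬ x = x. Proof. by case: ax => [[]]. Qed.
Lemma addU x : x ⊕ U = U. Proof. by case: ax => [[]]. Qed.
Lemma luk x y : ¬(¬x ⊕ y) ⊕ y = ¬(¬y ⊕ x) ⊕ x. Proof. by case: ax. Qed.
Lemma Zadd x : Z ⊕ x = x. Proof. by rewrite addC addZ. Qed.
Lemma Uadd x : U ⊕ x = U. Proof. by rewrite addC addU. Qed.
Lemma negU : ¬ U = Z. Proof. by rewrite /mv_one negK. Qed.
Lemma negZ : ¬ Z = U. Proof. by []. Qed.
Lemma addCA x y z : x ⊕ (y ⊕ z) = y ⊕ (x ⊕ z).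
Proof. by rewrite addA (addC x) -addA. Qed.
Lemma addAC x y z : x ⊕ y ⊕ z = x ⊕ z ⊕ y.
Proof. by rewrite -addA (addC y) addA. Qed.
Lemma addN x : x ⊕ ¬x = U.
Proof.
have := luk x U; rewrite addU negU Zadd => ->.
by rewrite addC.
Qed.
Lemma Nadd x : ¬x ⊕ x = U. Proof. by rewrite addC addN. Qed.

Definition le x y := ¬x ⊕ y = U.

Lemma mleP x y : le x y <-> exists z, y = x ⊕ z.
Proof.
split.
- rewrite /le => h; exists (¬(¬y ⊕ x)).
  by have := luk x y; rewrite h negU Zadd addC.
- by case=> z ->; rewrite /le addA Nadd Uadd.
Qed.
Lemma mle_refl x : le x x. Proof. exact: Nadd. Qed.
Lemma mle_trans x y z : le x y -> le y z -> le x z.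
Proof.
move=> /mleP[a ->] /mleP[b ->]; apply/mleP; exists (a ⊕ b); by rewrite addA.
Qed.
Lemma mle_anti x y : le x y -> le y x -> x = y.
Proof. by rewrite /le => h1 h2; have := luk x y; rewrite h1 h2 negU !Zadd. Qed.
Lemma le_addr x z : le x (x ⊕ z). Proof. by apply/mleP; exists z. Qed.
Lemma le_addl x z : le x (z ⊕ x). Proof. by rewrite addC; apply: le_addr. Qed.
Lemma le_add2r x y z : le x y -> le (x ⊕ z) (y ⊕ z).
Proof. by move=> /mleP[a ->]; apply/mleP; exists a; rewrite addAC. Qed.
Lemma le_add x y u v : le x y -> le u v -> le (x ⊕ u) (y ⊕ v).
Proof.
move=> h1 h2; apply: (mle_trans (le_add2r u h1)).
by rewrite (addC y) (addC y); apply: le_add2r.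
Qed.
Lemma le_neg x y : le x y -> le (¬y) (¬x).
Proof. by rewrite /le negK addC. Qed.
Lemma le_negl x y : le (¬x) y <-> le (¬y) x.
Proof. by rewrite /le !negK addC. Qed.
Lemma le_negr x y : le x (¬y) <-> le y (¬x).
Proof. by rewrite /le addC. Qed.
Lemma le0 x : le Z x. Proof. by rewrite /le negZ Uadd. Qed.
Lemma le1 x : le x U. Proof. by rewrite /le addU. Qed.
Lemma le1E x : le U x -> x = U. Proof. by move=> h; apply: mle_anti => //; apply: le1. Qed.
Lemma le0E x : le x Z -> x = Z. Proof. by move=> h; apply: mle_anti => //; apply: le0. Qed.

Lemma joinE x y : J x y = ¬(¬x ⊕ y) ⊕ y. Proof. by []. Qed.
Lemma joinC x y : J x y = J y x. Proof. exact: luk. Qed.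
Lemma le_joinr x y : le y (J x y). Proof. by rewrite joinE; apply: le_addl. Qed.
Lemma le_joinl x y : le x (J x y). Proof. by rewrite joinC; apply: le_joinr. Qed.
Lemma join_idr x y : le x y -> J x y = y.
Proof. by rewrite /le joinE => ->; rewrite negU Zadd. Qed.
Lemma join_idl x y : le y x -> J x y = x.
Proof. by rewrite joinC; apply: join_idr. Qed.
Lemma join_lub x y t : le x t -> le y t -> le (J x y) t.
Proof.
move=> hx hy; rewrite joinE.
have h : le (¬(¬x ⊕ y)) (¬(¬t ⊕ y)) by apply/le_neg/le_add2r/le_neg.
apply: (mle_trans (le_add2r y h)).
by rewrite -joinE joinC join_idr //; apply: mle_refl.
Qed.

Lemma meetE x y : Mt x y = ¬ J (¬x) (¬y). Proof. by []. Qed.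
Lemma meetC x y : Mt x y = Mt y x. Proof. by rewrite !meetE joinC. Qed.
Lemma le_meetl x y : le (Mt x y) x.
Proof. by rewrite meetE; apply/le_negl; apply: le_joinl. Qed.
Lemma le_meetr x y : le (Mt x y) y.
Proof. by rewrite meetC; apply: le_meetl. Qed.
Lemma meet_glb x y t : le t x -> le t y -> le t (Mt x y).
Proof.
by move=> hx hy; rewrite meetE; apply/le_negr; apply: join_lub; apply: le_neg.
Qed.
Lemma meetU x : Mt x U = x.
Proof. by rewrite meetE negU joinE !addZ !negK. Qed.
Lemma meet_idl x y : le x y -> Mt x y = x.
Proof. by move=> h; rewrite meetE join_idl ?negK //; exact: le_neg. Qed.

Lemma le_mull x y : le (¬(¬x ⊕ y)) x.
Proof. by apply/le_negl; apply: le_addr. Qed.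
Lemma resid a b c : le (¬(¬a ⊕ c)) b <-> le a (b ⊕ c).
Proof. by rewrite /le negK addCA addC. Qed.
Lemma residL a b c : le a (b ⊕ c) -> le (¬(¬a ⊕ c)) b.
Proof. by move/resid. Qed.
Lemma residR a b c : le (¬(¬a ⊕ c)) b -> le a (b ⊕ c).
Proof. by move/resid. Qed.

Lemma addmeet w p : ¬(¬(w ⊕ p) ⊕ w) = Mt p (¬w).
Proof. by rewrite meetE joinE !negK (addC p w). Qed.

Lemma distr w p q : w ⊕ Mt p q = Mt (w ⊕ p) (w ⊕ q).
Proof.
apply: mle_anti.
  apply: meet_glb; rewrite (addC w) (addC w); apply: le_add2r.
    exact: le_meetl.
  exact: le_meetr.
rewrite (addC w (Mt p q)); apply: residR; apply: meet_glb.
- apply: mle_trans (le_meetl p (¬w)); rewrite -addmeet.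
  apply/le_neg/le_add2r/le_neg/le_meetl.
- apply: mle_trans (le_meetl q (¬w)); rewrite -addmeet.
  apply/le_neg/le_add2r/le_neg/le_meetr.
Qed.

Lemma add_meetN p q : p ⊕ Mt q (¬p) = p ⊕ q.
Proof. by rewrite distr addN meetU. Qed.

(* e = (e (.) x) (+) (e /\ ~x) ; here e (.) x = ~(~e + ~x) *)
Lemma decompE e x : e = ¬(¬e ⊕ ¬x) ⊕ Mt e (¬x).
Proof.
have -> : Mt e (¬x) = ¬(¬e ⊕ ¬(¬e ⊕ ¬x)).
  rewrite meetE negK joinC joinE (addC (¬x)); congr (¬ _); exact: addC.
rewrite addC -joinE join_idl //; exact: le_mull.
Qed.

Lemma addmul_id p q : p ⊕ q ⊕ ¬(¬p ⊕ ¬q) = p ⊕ q.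
Proof.
have h := decompE q p.
rewrite [in RHS]h addCA add_meetN (addC (¬q)) addC.
by rewrite addCA addA.
Qed.

Lemma prelin x y : Mt (¬(¬x ⊕ y)) (¬(¬y ⊕ x)) = Z.
Proof.
rewrite meetE !negK joinE.
have -> : ¬(¬x ⊕ y) ⊕ (¬y ⊕ x) = ¬y ⊕ x.
  have := addmul_id x (¬y); rewrite negK => h.
  by rewrite addC (addC (¬y)) h.
by rewrite Nadd negU.
Qed.

Lemma meet_add c u v : le (Mt c (u ⊕ v)) (Mt c u ⊕ Mt c v).
Proof.
have hw : le (Mt c (u ⊕ v)) c := le_meetl _ _.
have hw2 : le (Mt c (u ⊕ v)) (v ⊕ u) by rewrite addC; exact: le_meetr.
set w := Mt c (u ⊕ v) in hw hw2 *.
rewrite [X in le X _](decompE w (¬u)) negK (addC _ (Mt w u)).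
apply: le_add.
- apply: meet_glb; last exact: le_meetr.
  exact: mle_trans (le_meetl _ _) hw.
- apply: meet_glb.
    exact: mle_trans (le_mull _ _) hw.
  exact: residL.
Qed.

Fixpoint mul n x := if n is n'.+1 then x ⊕ mul n' x else Z.
Lemma mulS n x : mul n.+1 x = x ⊕ mul n x. Proof. by []. Qed.
Lemma mul0 x : mul 0 x = Z. Proof. by []. Qed.
Lemma mul1 x : mul 1 x = x. Proof. by rewrite /= addZ. Qed.
Lemma mulD m n x : mul (m + n) x = mul m x ⊕ mul n x.
Proof. by elim: m => [|m IH] /=; rewrite ?Zadd // IH addA. Qed.
Lemma mulM m n x : mul (m * n) x = mul m (mul n x).
Proof. by elim: m => [|m IH] //; rewrite mulSn mulD IH. Qed.
Lemma mulZ n : mul n Z = Z.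
Proof. by elim: n => [|n IH] //=; rewrite IH addZ. Qed.
Lemma le_mul n x y : le x y -> le (mul n x) (mul n y).
Proof. by move=> h; elim: n => [|n IH] /=; [exact: mle_refl | exact: le_add]. Qed.
Lemma le_muln m n x : (m <= n)%N -> le (mul m x) (mul n x).
Proof. by move=> /subnKC <-; rewrite mulD; apply: le_addr. Qed.
Lemma meet_mul c n u : le (Mt c (mul n u)) (mul n (Mt c u)).
Proof.
elim: n => [|n IH] /=; first exact: le_meetr.
apply: mle_trans (meet_add _ _ _) _.
apply: le_add; first exact: mle_refl.
exact: IH.
Qed.

Hypothesis hM : mv_zero M <> mv_one M.
Definition pideal (A : set M) :=
  [/\ (forall x y, A x -> A y -> A (x ⊕ y)), (forall x y, le x y -> A y -> A x) & ~ A U].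

Lemma exists_max : exists A, pideal A /\ forall B, A `<` B -> ~ pideal B.
Proof.
apply: Zorn_bigcup => F FP Ftot; split.
- move=> x y [X FX Xx] [Y FY Yy].
  have [XY|YX] := Ftot X Y FX FY.
  + exists Y => //; have [h _ _] := FP Y FY; exact: h (XY _ Xx) Yy.
  + exists X => //; have [h _ _] := FP X FX; exact: h Xx (YX _ Yy).
- move=> x y hxy [Y FY Yy]; exists Y => //; have [_ h _] := FP Y FY; exact: h hxy Yy.
- by move=> [Y FY YU]; have [_ _ h] := FP Y FY; exact: h YU.
Qed.

Section MaxIdeal.
Variable A : set M.
Hypothesis Aid : pideal A.
Hypothesis Amax : forall B, A `<` B -> ~ pideal B.

Lemma Aadd x y : A x -> A y -> A (x ⊕ y). Proof. by case: Aid => h _ _; exact: h. Qed.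
Lemma Adown x y : le x y -> A y -> A x. Proof. by case: Aid => _ h _; exact: h. Qed.
Lemma AU : ~ A U. Proof. by case: Aid => _ _ h. Qed.

Lemma AZ : A Z.
Proof.
apply: contrapT => AZ.
apply: (Amax (B := [set Z])).
  split.
    move=> a Aa; exfalso; apply: AZ; exact: Adown (le0 a) Aa.
  by move=> /(_ Z erefl).
split.
- by move=> x y -> ->; rewrite addZ.
- by move=> x y hxy yZ; rewrite yZ in hxy; exact: le0E.
- by move=> /= h; apply: hM.
Qed.

Lemma Amaxi x : ~ A x -> exists i n, A i /\ i ⊕ mul n x = U.
Proof.
move=> Ax.
pose B := [set y | exists i n, A i /\ le y (i ⊕ mul n x)].
have AB : A `<` B.
  split.
    move=> y Ay; exists y, 0%N; split => //; exact: le_addr.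
  move=> /(_ x) h; apply: Ax; apply: h; exists Z, 1%N; split; first exact: AZ.
  by rewrite mul1 Zadd; exact: mle_refl.
have : ~ pideal B by exact: Amax.
move=> nB.
have BU : B U.
  apply: contrapT => nBU; apply: nB; split => //.
  - move=> y1 y2 [i1 [n1 [Ai1 h1]]] [i2 [n2 [Ai2 h2]]].
    exists (i1 ⊕ i2), (n1 + n2)%N; split; first exact: Aadd.
    apply: mle_trans (le_add h1 h2) _.
    rewrite mulD !addA (addAC i1 (mul n1 x) i2); exact: mle_refl.
  - move=> y1 y2 h [i [n [Ai h2]]]; exists i, n; split => //; exact: mle_trans h h2.
case: BU => i [n [Ai h]]; exists i, n; split => //; exact: le1E h.
Qed.

Definition lei x y := A (¬(¬x ⊕ y)).

Lemma le_lei x y : le x y -> lei x y.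
Proof. by rewrite /lei /le => ->; rewrite negU; exact: AZ. Qed.
Lemma lei_refl x : lei x x. Proof. exact/le_lei/mle_refl. Qed.
Lemma lei_trans x y z : lei x y -> lei y z -> lei x z.
Proof.
rewrite /lei => h1 h2; apply: Adown (Aadd h1 h2).
apply: residL; rewrite -addA.
apply: mle_trans (le_joinl x y) _; rewrite joinE.
apply: le_add; first exact: mle_refl.
exact: le_joinl.
Qed.
Lemma lei_add2r x y c : lei x y -> lei (x ⊕ c) (y ⊕ c).
Proof.
rewrite /lei => h; apply: Adown h.
apply: residL; rewrite addA.
apply: le_add2r; exact: le_joinl.
Qed.
Lemma lei_add x y u v : lei x y -> lei u v -> lei (x ⊕ u) (y ⊕ v).
Proof.
move=> h1 h2; apply: lei_trans (lei_add2r u h1) _.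
rewrite (addC y) (addC y); exact: lei_add2r.
Qed.
Lemma lei_neg x y : lei x y -> lei (¬y) (¬x).
Proof. by rewrite /lei negK addC. Qed.
Lemma leiZ x : lei x Z <-> A x.
Proof. by rewrite /lei addZ negK. Qed.
Lemma lei0 x : lei Z x. Proof. exact/le_lei/le0. Qed.
Lemma lei1 x : lei x U. Proof. exact/le_lei/le1. Qed.
Lemma leiU x : lei U x <-> A (¬x).
Proof. by rewrite /lei negU Zadd. Qed.
Lemma lei_mul n x y : lei x y -> lei (mul n x) (mul n y).
Proof. by move=> h; elim: n => [|n IH] /=; [exact: lei_refl | exact: lei_add]. Qed.
Lemma lei_muln m n x : (m <= n)%N -> lei (mul m x) (mul n x).
Proof. by move=> h; apply/le_lei/le_muln. Qed.

Lemma lei_total x y : lei x y \/ lei y x.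
Proof.
case: (pselect (lei x y)) => hxy; [by left | right].
have [i [n [Ai hi]]] := Amaxi hxy.
rewrite /lei; apply: Adown Ai.
set b := ¬(¬y ⊕ x).
rewrite -(meetU b) -hi.
apply: mle_trans (meet_add _ _ _) _.
rewrite -[X in le _ X]addZ; apply: le_add; first exact: le_meetr.
apply: mle_trans (meet_mul _ _ _) _.
by rewrite meetC prelin mulZ; exact: mle_refl.
Qed.

Lemma meet_in p q : A (Mt p q) -> A p \/ A q.
Proof.
move=> h; case: (lei_total p q) => hpq; [left|right].
- rewrite (decompE p (¬q)) negK; apply: Aadd hpq _; exact: h.
- rewrite (decompE q (¬p)) negK; apply: Aadd hpq _; by rewrite meetC.
Qed.

Lemma lei_S x e : lei (x ⊕ e) x -> ~ A e -> A (¬x).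
Proof.
rewrite /lei addmeet => h ne.
by case: (meet_in h).
Qed.

Lemma lei_absorb u v : A u -> lei (u ⊕ v) v.
Proof. by move=> h; rewrite /lei; apply: Adown h; apply: residL; exact: mle_refl. Qed.

Lemma lei_join p q : lei q p -> lei (J p q) p.
Proof. by move=> h; rewrite joinC joinE; exact: lei_absorb. Qed.

Lemma arch y : ~ A y -> exists n, lei U (mul n y).
Proof.
move=> hy; have [i [n [Ai h]]] := Amaxi hy; exists n; apply/leiU.
apply: Adown Ai; rewrite /le negK addC h; exact: erefl.
Qed.

Definition Pn y n : bool := `[< lei U (mul n y) >].
Definition Nf y : nat :=
  match pselect (exists n, Pn y n) with left H => ex_minn H | right _ => 0%N end.

Lemma NfP y : ~ A y -> lei U (mul (Nf y) y) /\ (forall n, lei U (mul n y) -> (Nf y <= n)%N).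
Proof.
move=> hy; rewrite /Nf; case: pselect => [H|nH].
- case: ex_minnP => m /asboolP hm hmin; split => // n hn; apply: hmin; exact/asboolP.
- exfalso; apply: nH; case: (arch hy) => n hn; exists n; exact/asboolP.
Qed.

Lemma Nf_gt0 y : ~ A y -> (0 < Nf y)%N.
Proof.
move=> hy; case: (NfP hy) => h _; rewrite lt0n; apply/eqP => e.
by move: h; rewrite e /= => /leiU; rewrite negZ; exact: AU.
Qed.
Lemma Nf_lt y n : ~ A y -> (n < Nf y)%N -> ~ lei U (mul n y).
Proof. by move=> hy hn h; case: (NfP hy) => _ /(_ n h); rewrite leqNgt hn. Qed.
Lemma Nf_ge y n : ~ A y -> (Nf y <= n)%N -> lei U (mul n y).
Proof. by move=> hy hn; case: (NfP hy) => h _; apply: lei_trans h (lei_muln _ hn). Qed.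

Definition Pc x y k := (k <= Nf y)%N && `[< lei (mul k y) x >].
Lemma Pc_ex x y : exists k, Pc x y k.
Proof. by exists 0%N; rewrite /Pc leq0n /=; apply/asboolP; exact: lei0. Qed.
Lemma Pc_ub x y : forall k, Pc x y k -> (k <= Nf y)%N.
Proof. by move=> k /andP[]. Qed.
Definition cc x y := ex_maxn (Pc_ex x y) (@Pc_ub x y).

Lemma ccP x y : [/\ (cc x y <= Nf y)%N, lei (mul (cc x y) y) x &
  forall k, (k <= Nf y)%N -> lei (mul k y) x -> (k <= cc x y)%N].
Proof.
rewrite /cc; case: ex_maxnP => m /andP[hm /asboolP hl] hmax; split => // k hk hl'.
by apply: hmax; rewrite /Pc hk; apply/asboolP.
Qed.
Lemma cc_le x y : (cc x y <= Nf y)%N. Proof. by case: (ccP x y). Qed.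
Lemma cc_lei x y : lei (mul (cc x y) y) x. Proof. by case: (ccP x y). Qed.
Lemma cc_max x y k : (k <= Nf y)%N -> lei (mul k y) x -> (k <= cc x y)%N.
Proof. by case: (ccP x y) => _ _; apply. Qed.
Lemma cc_lt x y k : (k <= Nf y)%N -> (cc x y < k)%N -> ~ lei (mul k y) x.
Proof. by move=> hk hlt h; move: (cc_max hk h); rewrite leqNgt hlt. Qed.

Section Fixy.
Variable y : M.
Hypothesis hy : ~ A y.

Lemma ccU : cc U y = Nf y.
Proof. by apply/eqP; rewrite eqn_leq cc_le /=; apply: cc_max => //; exact: lei1. Qed.

Lemma cc_addl a d : (minn (cc a y + cc d y) (Nf y) <= cc (a ⊕ d) y)%N.
Proof.
apply: cc_max; first exact: geq_minr.
apply: lei_trans (lei_muln _ (geq_minl _ _)) _.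
rewrite mulD; apply: lei_add; exact: cc_lei.
Qed.

Lemma cc_addr a d : (cc (a ⊕ d) y <= cc a y + cc d y + 2)%N.
Proof.
rewrite leqNgt; apply/negP => H.
set k := cc a y in H; set l := cc d y in H; set r := cc (a ⊕ d) y in H.
have hr : (r <= Nf y)%N := cc_le _ _.
have hm : ~ lei U (mul (k + l + 2) y) by apply: Nf_lt => //; lia.
have hmd : lei (mul (k + l + 2) y) (a ⊕ d).
  exact: lei_trans (lei_muln _ (ltnW H)) (cc_lei _ _).
have nka : ~ lei (mul k.+1 y) a.
  by apply: cc_lt => //; lia.
have nld : ~ lei (mul l.+1 y) d.
  by apply: cc_lt => //; lia.
have ha : lei a (mul k.+1 y) by case: (lei_total a (mul k.+1 y)).
have hd : lei d (mul l.+1 y) by case: (lei_total d (mul l.+1 y)).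
have me : mul (k + l + 2) y = mul k.+1 y ⊕ mul l.+1 y.
  by rewrite -mulD; congr mul; lia.
rewrite me in hm hmd.
set e := ¬(¬(mul k.+1 y) ⊕ a).
have h1 : lei ((a ⊕ d) ⊕ e) (a ⊕ d).
  apply: lei_trans hmd; rewrite addAC (addC a); apply: lei_add hd.
  by rewrite /e -joinE; apply: lei_join.
have := lei_S h1 nka => /leiU hU.
by apply: hm; apply: lei_trans hU (lei_add ha hd).
Qed.

Lemma cc_neg a : (cc a y + cc (¬a) y <= Nf y)%N.
Proof.
rewrite leqNgt; apply/negP => H.
have hk : (cc a y <= Nf y)%N := cc_le _ _.
have hl : (cc (¬a) y <= Nf y)%N := cc_le _ _.
have k0 : (0 < cc a y)%N by lia.
have [l' el] : exists l', cc (¬a) y = l'.+1 by exists (cc (¬a) y).-1; lia.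
have hpa := cc_lei a y; have hqa := cc_lei (¬a) y; rewrite el in hqa.
set p := mul (cc a y) y in hpa; set s := mul l' y.
have hps : lei U (p ⊕ s) by rewrite /p /s -mulD; apply: Nf_ge => //; lia.
have h1 : lei (¬p) s by move/leiU: hps; rewrite /lei negK.
have h2 : lei (s ⊕ y) s.
  rewrite addC; apply: lei_trans hqa _; apply: lei_trans _ h1; exact: lei_neg.
have /leiU hsU := lei_S h2 hy.
have haU : lei U (¬a) by apply: lei_trans hsU (lei_trans (lei_muln _ (leqnSn _)) hqa).
move/leiU: haU; rewrite negK => Aa.
apply: hy; apply/leiZ; apply: lei_trans _ (proj2 (leiZ a) Aa).
apply: lei_trans _ hpa; rewrite -[X in lei X _]mul1; exact: lei_muln.
Qed.

End Fixy.

Section Atom.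
Variable y0 : M.
Hypothesis hy0 : ~ A y0.
Hypothesis atom : forall z, ~ A z -> lei y0 z.

Lemma cc_exact x : lei x (mul (cc x y0) y0).
Proof.
have hk := cc_le x y0.
case: (ltnP (cc x y0) (Nf y0)) => hlt; last first.
  by apply: lei_trans (lei1 _) (Nf_ge hy0 hlt).
have nk : ~ lei (mul (cc x y0).+1 y0) x by apply: cc_lt.
case: (pselect (A (¬(¬x ⊕ mul (cc x y0) y0)))) => // nr.
exfalso; apply: nk; rewrite mulS.
apply: lei_trans (lei_add2r _ (atom nr)) _.
rewrite -joinE; apply: lei_join; exact: cc_lei.
Qed.

Lemma cc_add_atom a d : (cc (a ⊕ d) y0 <= cc a y0 + cc d y0)%N.
Proof.
rewrite leqNgt; apply/negP => H.
have hr := cc_le (a ⊕ d) y0.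
have h1 : lei (mul (cc a y0 + cc d y0).+1 y0) (a ⊕ d).
  exact: lei_trans (lei_muln _ H) (cc_lei _ _).
have h2 : lei (a ⊕ d) (mul (cc a y0 + cc d y0) y0).
  by rewrite mulD; apply: lei_add; apply: cc_exact.
have h3 := lei_trans h1 h2; rewrite mulS addC in h3.
have /leiU h4 := lei_S h3 hy0.
by apply: (Nf_lt hy0 _ h4); lia.
Qed.

Lemma cc_neg_atom a : (Nf y0 <= cc a y0 + cc (¬a) y0)%N.
Proof. by rewrite -(ccU y0) -(addN a); apply: cc_add_atom. Qed.
End Atom.

Section NonAtom.
Hypothesis natom : forall y, ~ A y -> exists z, ~ A z /\ ~ lei y z.

Lemma cross x y w : ~ A y -> ~ A w ->
  (minn (cc x y * cc y w) (Nf w) <= cc x w)%N.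
Proof.
move=> hy hw; apply: cc_max; first exact: geq_minr.
apply: lei_trans (lei_muln _ (geq_minl _ _)) _.
rewrite mulM; apply: lei_trans (cc_lei x y).
apply: lei_mul; exact: cc_lei.
Qed.

Lemma cross2 y w : ~ A y -> ~ A w -> (Nf w <= Nf y * (cc y w).+1)%N.
Proof.
move=> hy hw; have hN := Nf_gt0 hy.
case: (ltnP (cc y w) (Nf w)) => hlt; last by nia.
have nj : ~ lei (mul (cc y w).+1 w) y by apply: cc_lt.
have hj : lei y (mul (cc y w).+1 w) by case: (lei_total y (mul (cc y w).+1 w)).
case: (NfP hw) => _; apply; rewrite mulM.
apply: lei_trans (proj1 (NfP hy)) _; exact: lei_mul.
Qed.

Lemma Nf_anti y w : ~ A y -> ~ A w -> lei w y -> (Nf y <= Nf w)%N.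
Proof.
move=> hy hw h; case: (NfP hy) => _; apply.
apply: lei_trans (proj1 (NfP hw)) _; exact: lei_mul.
Qed.

Lemma growth K : exists y0, ~ A y0 /\ forall w, ~ A w -> lei w y0 -> (K <= Nf w)%N.
Proof.
elim: K => [|K [y0 [hy0 IH]]]; first by exists U; split; [exact: AU|].
have [z [hz nyz]] := natom hy0.
set e := ¬(¬y0 ⊕ z).
have he : ~ A e by [].
have hzy : lei z y0 by case: (lei_total y0 z).
set w := Mt z e.
have hw : ~ A w by move=> /meet_in [].
have h2 : lei (mul 2 w) y0.
  apply: lei_trans (lei_join hzy); rewrite joinE -/e addC.
  apply: le_lei; rewrite /= addZ; apply: le_add; [exact: le_meetl | exact: le_meetr].
have hm1 : (1 < Nf w)%N.
  have := Nf_gt0 hw; case E: (Nf w) => [|[|m]] // _.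
  exfalso; case: (NfP hw) => hU _; rewrite E mul1 in hU.
  apply: nyz; apply: lei_trans (lei1 _) _; apply: lei_trans hU _.
  exact/le_lei/le_meetl.
have hK : (K <= Nf y0)%N by apply: IH => //; exact: lei_refl.
have hy0w : (Nf y0 <= (Nf w).-1)%N.
  case: (NfP hy0) => _; apply.
  apply: lei_trans (proj1 (NfP hw)) _.
  apply: lei_trans (lei_muln _ (_ : (Nf w <= (Nf w).-1 * 2)%N)) _; first by lia.
  rewrite mulM; exact: lei_mul.
exists w; split => // w' hw' hw'w.
apply: leq_trans (Nf_anti hw hw' hw'w); lia.
Qed.
End NonAtom.

Section Real.
Variable R : realType.
Local Open Scope ring_scope.

Definition Lr y x : R := (cc x y)%:R / (Nf y)%:R.

Lemma Lr_ge0 y x : 0 <= Lr y x.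
Proof. by rewrite /Lr divr_ge0. Qed.
Lemma Lr_le1 y x : ~ A y -> Lr y x <= 1.
Proof.
move=> hy; have hN : (0 : R) < (Nf y)%:R by rewrite ltr0n Nf_gt0.
by rewrite /Lr ler_pdivrMr // mul1r ler_nat cc_le.
Qed.

Definition is_state (h : M -> R) :=
  [/\ forall x, 0 <= h x <= 1,
      forall a d, h (a ⊕ d) = Num.min (h a + h d) 1,
      forall a, h (¬a) = 1 - h a & h U = 1].

Lemma state_atom y0 : ~ A y0 -> (forall z, ~ A z -> lei y0 z) -> is_state (Lr y0).
Proof.
move=> hy0 atom.
have hN : (0 : R) < (Nf y0)%:R by rewrite ltr0n Nf_gt0.
have hN0 : (Nf y0)%:R != 0 :> R by rewrite gt_eqF.
split.
- by move=> x; rewrite Lr_ge0 Lr_le1.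
- move=> a d.
  have h1 := cc_addl y0 a d; have h2 := cc_add_atom hy0 atom a d.
  have h3 := cc_le (a ⊕ d) y0.
  rewrite /Lr -mulrDl.
  case: (leqP (cc a y0 + cc d y0) (Nf y0)) => hs.
  + have -> : cc (a ⊕ d) y0 = (cc a y0 + cc d y0)%N by lia.
    rewrite min_l; first by rewrite natrD.
    by rewrite -natrD ler_pdivrMr // mul1r ler_nat.
  + have -> : cc (a ⊕ d) y0 = Nf y0 by lia.
    rewrite min_r; first by rewrite mulfV.
    by rewrite -natrD ler_pdivlMr // mul1r ler_nat ltnW.
- move=> a; have h1 := cc_neg hy0 a; have h2 := cc_neg_atom hy0 atom a.
  rewrite /Lr; have -> : cc (¬a) y0 = (Nf y0 - cc a y0)%N by lia.
  by rewrite natrB ?cc_le // mulrBl mulfV.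
- by rewrite /Lr ccU mulfV.
Qed.

Lemma minle_l (x y : R) : Num.min x y <= x. Proof. by rewrite ge_min lexx. Qed.
Lemma minle_r (x y : R) : Num.min x y <= y. Proof. by rewrite ge_min lexx orbT. Qed.

Lemma Lr_U y : ~ A y -> Lr y U = 1.
Proof.
move=> hy; have hN : (Nf y)%:R != 0 :> R by rewrite pnatr_eq0 -lt0n Nf_gt0.
by rewrite /Lr ccU mulfV.
Qed.

Lemma Nf_pos y : ~ A y -> (0 : R) < (Nf y)%:R.
Proof. by move=> hy; rewrite ltr0n Nf_gt0. Qed.

Lemma Lr_addl w a d : ~ A w -> Num.min (Lr w a + Lr w d) 1 <= Lr w (a ⊕ d).
Proof.
move=> hw; have hN := Nf_pos hw.
have h1 := cc_addl w a d; have h3 := cc_le (a ⊕ d) w.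
case: (leqP (cc a w + cc d w) (Nf w)) => hs.
- apply: le_trans (minle_l _ _) _.
  rewrite /Lr -mulrDl ler_wpM2r ?invr_ge0 ?ler0n // -natrD ler_nat; lia.
- have -> : Lr w (a ⊕ d) = 1.
    rewrite /Lr; have -> : cc (a ⊕ d) w = Nf w by lia.
    by rewrite mulfV // gt_eqF.
  exact: minle_r.
Qed.

Lemma Lr_addr w a d : ~ A w -> Lr w (a ⊕ d) <= Lr w a + Lr w d + 2%:R / (Nf w)%:R.
Proof.
move=> hw; have hN := Nf_pos hw.
have h := cc_addr hw a d.
rewrite /Lr -!mulrDl ler_wpM2r ?invr_ge0 ?ler0n // -!natrD ler_nat; lia.
Qed.

Lemma Lr_neg w a : ~ A w -> Lr w a + Lr w (¬a) <= 1.
Proof.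
move=> hw; have hN := Nf_pos hw; have h := cc_neg hw a.
by rewrite /Lr -mulrDl ler_pdivrMr // mul1r -natrD ler_nat.
Qed.

Lemma core x y w : ~ A y -> ~ A w -> Lr y x - (Nf y)%:R / (Nf w)%:R <= Lr w x.
Proof.
move=> hy hw; have hNy := Nf_pos hy; have hNw := Nf_pos hw.
have X1 := cross x hy hw; have X2 := cross2 hy hw.
have hk := cc_le x y; have hcw := cc_le x w.
have hy1 : Lr y x <= 1 := Lr_le1 _ hy.
case: (leqP (Nf w) (cc x y * cc y w)) => hkj.
  have -> : Lr w x = 1 by rewrite /Lr (_ : cc x w = Nf w) ?mulfV ?gt_eqF //; lia.
  have : 0 <= (Nf y)%:R / (Nf w)%:R :> R by rewrite divr_ge0.
  lra.
have hnat : (cc x y * Nf w <= cc x y * cc y w * Nf y + Nf y * Nf y)%N by nia.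
have hcw2 : (cc x y * cc y w <= cc x w)%N by lia.
apply: (@le_trans _ _ ((cc x y * cc y w)%:R / (Nf w)%:R)); last first.
  by rewrite ler_wpM2r ?invr_ge0 ?ler0n // ler_nat.
rewrite /Lr lerBlDr -mulrDl ler_pdivlMr // mulrAC ler_pdivrMr //.
by rewrite -natrD -!natrM ler_nat; lia.
Qed.

Section NonAtomR.
Hypothesis natom : forall y, ~ A y -> exists z, ~ A z /\ ~ lei y z.

Definition Lset x : set R := [set Lr y x | y in [set y | ~ A y]].
Definition hs x := sup (Lset x).

Lemma Lset_sup x : has_sup (Lset x).
Proof.
split; first by exists (Lr U x); exists U => //; exact: AU.
by exists 1 => _ [y hy <-]; exact: Lr_le1.
Qed.
Lemma hs_ub x y : ~ A y -> Lr y x <= hs x.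
Proof. by move=> hy; apply: (sup_upper_bound (Lset_sup x)); exists y. Qed.
Lemma hs_le1 x : hs x <= 1.
Proof.
apply: ge_sup; first by exists (Lr U x); exists U => //; exact: AU.
by move=> _ [y hy <-]; exact: Lr_le1.
Qed.
Lemma hs_ge0 x : 0 <= hs x.
Proof. apply: le_trans (Lr_ge0 U x) (hs_ub _ AU). Qed.

Lemma below2 y1 y2 : ~ A y1 -> ~ A y2 -> exists w, [/\ ~ A w, lei w y1 & lei w y2].
Proof.
move=> h1 h2; case: (lei_total y1 y2) => h.
- by exists y1; split => //; exact: lei_refl.
- by exists y2; split => //; exact: lei_refl.
Qed.

Lemma Kbig (e : R) (n : nat) : 0 < e ->
  exists K : nat, forall N : nat, (K <= N)%N -> (0 < N)%N -> n%:R / N%:R < e.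
Proof.
move=> e0; exists (Num.trunc (n%:R / e)).+1 => N hKN hN.
have h := truncnS_gt (n%:R / e); rewrite ltr_pdivrMr // in h.
have hN' : (0 : R) < N%:R by rewrite ltr0n.
rewrite ltr_pdivrMr //; apply: lt_le_trans h _.
rewrite [X in X <= _]mulrC; apply: ler_wpM2l; [exact: ltW | rewrite ler_nat; exact: hKN].
Qed.

Lemma approx x (e : R) : 0 < e ->
  exists y1, ~ A y1 /\ forall w, ~ A w -> lei w y1 -> hs x - e < Lr w x.
Proof.
move=> e0; have e20 : 0 < e / 2 by rewrite divr_gt0.
have [_ [y hy <-] hlt] := sup_adherent e20 (Lset_sup x).
have [K hK] := Kbig (Nf y) e20.
have [y1 [hy1 hg]] := growth natom K.
exists y1; split => // w hw hwy.
have := hK (Nf w) (hg w hw hwy) (Nf_gt0 hw).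
have := core x hy hw.
rewrite -/(hs x) in hlt; lra.
Qed.

Lemma hs_add a d : hs (a ⊕ d) = Num.min (hs a + hs d) 1.
Proof.
  apply/eqP; rewrite eq_le; apply/andP; split.
  + rewrite le_min hs_le1 andbT; apply/ler_addgt0Pr => e e0.
    have e20 : 0 < e / 2 by rewrite divr_gt0.
    have [y1 [hy1 h1]] := approx (a ⊕ d) e20.
    have [K hK] := Kbig 2 e20.
    have [y2 [hy2 hg]] := growth natom K.
    have [w [hw hw1 hw2]] := below2 hy1 hy2.
    have := h1 w hw hw1; have := Lr_addr a d hw; have := hK _ (hg w hw hw2) (Nf_gt0 hw).
    have := hs_ub a hw; have := hs_ub d hw; lra.
  + apply/ler_addgt0Pr => e e0.
    have e20 : 0 < e / 2 by rewrite divr_gt0.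
    have [y1 [hy1 h1]] := approx a e20.
    have [y2 [hy2 h2]] := approx d e20.
    have [w [hw hw1 hw2]] := below2 hy1 hy2.
    have := h1 w hw hw1; have := h2 w hw hw2; have := Lr_addl a d hw.
    have := hs_ub (a ⊕ d) hw.
    case: (leP (hs a + hs d) 1) => hm; case: (leP (Lr w a + Lr w d) 1) => hm2; lra.
Qed.

Lemma hs_U : hs U = 1.
Proof.
apply/eqP; rewrite eq_le hs_le1 /=.
by have := hs_ub U AU; rewrite Lr_U //; exact: AU.
Qed.

Lemma hs_neg a : hs (¬a) = 1 - hs a.
Proof.
have h := hs_add a (¬a); rewrite addN hs_U in h.
have h1 : 1 <= hs a + hs (¬a) by rewrite h; exact: minle_l.
suff : hs a + hs (¬a) <= 1 by lra.
apply/ler_addgt0Pr => e e0.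
have e20 : 0 < e / 2 by rewrite divr_gt0.
have [y1 [hy1 h2]] := approx a e20.
have [y2 [hy2 h3]] := approx (¬a) e20.
have [w [hw hw1 hw2]] := below2 hy1 hy2.
have := h2 w hw hw1; have := h3 w hw hw2; have := Lr_neg a hw; lra.
Qed.

Lemma state_natom : is_state hs.
Proof.
split; [by move=> x; rewrite hs_ge0 hs_le1 | exact: hs_add | exact: hs_neg | exact: hs_U].
Qed.
End NonAtomR.

Lemma state_maxideal : exists h, is_state h.
Proof.
case: (pselect (exists y0, ~ A y0 /\ forall z, ~ A z -> lei y0 z)) => [[y0 [h1 h2]]|nex].
  by exists (Lr y0); exact: state_atom.
have natom : forall y, ~ A y -> exists z, ~ A z /\ ~ lei y z.
  move=> y hy; apply: contrapT => H; apply: nex; exists y; split => // z hz.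
  by apply: contrapT => nl; apply: H; exists z.
by exists hs; exact: state_natom natom.
Qed.

End Real.

End MaxIdeal.

Lemma exists_state (R : realType) : exists h : M -> R, is_state h.
Proof.
have [B [hB hBmax]] := exists_max.
exact: (state_maxideal hB hBmax).
Qed.
End MVBasic.

Local Open Scope ring_scope.

Lemma prob_mono (R : realType) (M : mv_algebra) (Y : topologicalType) (p : M -> Y -> R) :
  (forall a, in_CY (p a)) -> @prob_map M (fun_mv_sig R Y) p ->
  forall x x' y, le x x' -> p x y <= p x' y.
Proof.
move=> hC [P1 _ _] x x' y /(mleP (mv_axiomsP M)) [z ->].
rewrite P1 /=.
have /andP[h0 _] := (hC (mv_meet z (mv_neg x))).2 y.
have /andP[_ h1] := (hC x).2 y.
rewrite le_min h1 andbT; lra.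
Qed.

Local Open Scope ring_scope.
Local Open Scope classical_set_scope.

Theorem proposition3p5 (R : realType) (M : mv_algebra) (Y : topologicalType)
  (hM : mv_zero M <> mv_one M)
  (hYc : compact [set: Y]) (hYh : hausdorff_space Y) :
  @prob_maps_CY R M Y !=set0 /\ convex_fset (@prob_maps_CY R M Y).
Proof.
have ax := mv_axiomsP M.
split.
  have [h [hb hadd hneg hU]] := exists_state ax hM R.
  exists (fun a _ => h a); split.
    move=> a; split; first exact: cst_continuous.
    by move=> _; exact: hb.
  split.
  - move=> a b; apply/funext => y /=.
    by rewrite -hadd add_meetN.
  - by move=> a; apply/funext => y /=; rewrite hneg.
  - by apply/funext => y /=; rewrite hU subr0.
move=> p q t [pC pP] [qC qP] /andP[t0 t1].
have hpm := prob_mono pC pP; have hqm := prob_mono qC qP.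
split.
  move=> a; split.
    move=> y.
    apply: (@continuousD _ _ _ (fun y => t * p a y) (fun y => (1 - t) * q a y)).
      apply: (@continuousM _ _ (fun=> t) (p a)); [exact: cst_continuous | exact: (pC a).1].
    apply: (@continuousM _ _ (fun=> 1 - t) (q a)); [exact: cst_continuous | exact: (qC a).1].
  move=> y; have /andP[p0 p1] := (pC a).2 y; have /andP[q0 q1] := (qC a).2 y.
  apply/andP; split; nra.
case: pP => [P1 P2 P3]; case: qP => [Q1 Q2 Q3].
split.
- move=> a b; apply/funext => y /=.
  set d := mv_meet b (mv_neg a).
  have hp := f_equal (fun f => f y) (P1 a b); have hq := f_equal (fun f => f y) (Q1 a b).
  simpl in hp, hq; rewrite hp hq -/d.
  have ld : le d (mv_neg a) by exact: le_meetr.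
  have hpd := hpm _ _ y ld; have hqd := hqm _ _ y ld.
  rewrite P2 in hpd; rewrite Q2 in hqd; simpl in hpd, hqd.
  have /andP[p0 _] := (pC d).2 y; have /andP[q0 _] := (qC d).2 y.
  rewrite !min_l; [ring | nra | lra | lra].
- move=> a; apply/funext => y /=; rewrite P2 Q2 /=; ring.
- apply/funext => y /=; rewrite P3 Q3 /=; ring.
Qed.
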